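(* In the setting below, if $\{\mathbb G(t)\}$ is uniformly strongly connected, then the sequence of stochastic matrices $\{S(t)\}$ has a unique absolute probability sequence $\{\pi(t)\}$, and it is given by $\pi_i(t)=\frac{y_i(t)}{n}$ for all $i\in\mathcal V$ and $t\ge0$. In particular $y^\top(t)=y^\top(t+1)S(t)$ for all $t\ge0$.
   Context: Setting. Fix $n$ agents, $\mathcal V=\{1,\dots,n\}$. For each $t\in\{0,1,2,\dots\}$, $\mathbb G(t)=(\mathcal V,\mathcal E(t))$ is a directed graph containing a self-arc $(i,i)$ at every vertex; $\mathcal N_i(t)=\{j:(j,i)\in\mathcal E(t)\}$ and $\mathcal N_i^-(t)=\{k:(i,k)\in\mathcal E(t)\}$. Weights $w_{ij}(t)$ are positive for $j\in\mathcal N_i(t)$ and $w_{ij}(t)=0$ otherwise, and satisfy: there is $\beta>0$ with $w_{ij}(t)\ge\beta$ whenever $j\in\mathcal N_i(t)$, and $\sum_{j\in\mathcal N_i^-(t)}w_{ji}(t)=1$ for all $i,t$. The sequence $\{\mathbb G(t)\}$ is uniformly strongly connected if there is a positive integer $L$ such that for every $t\ge0$ the directed graph with vertex set $\mathcal V$ and edge set $\bigcup_{k=t}^{t+L-1}\mathcal E(k)$ is strongly connected. The $y$-iteration of push-sum: $y_i(t+1)=\sum_{j}w_{ij}(t)y_j(t)$, $y_i(0)=1$. Define the row-stochastic matrix $S(t)$ with entries $s_{ij}(t)=w_{ij}(t)y_j(t)/y_i(t+1)$. Definition: for a sequence $\{S(t)\}_{t\ge0}$ of (row) stochastic matrices,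 a sequence of stochastic vectors $\{\pi(t)\}_{t\ge0}$ (nonnegative entries summing to one) is an absolute probability sequence if $\pi^\top(t)=\pi^\top(t+1)S(t)$ for all $t\ge0$. *)

(* Defs.v *)
From mathcomp Require Import all_boot all_order all_algebra.
Set Implicit Arguments. Unset Strict Implicit. Unset Printing Implicit Defensive.
Import Order.TTheory GRing.Theory Num.Theory.
Local Open Scope ring_scope.

(* A time-varying directed graph on 'I_n: E t j i means (j,i) \in E(t). *)
Definition graph_seq (n : nat) := nat -> rel 'I_n.

Definition union_rel (n : nat) (E : graph_seq n) (t L : nat) : rel 'I_n :=
  fun j i => [exists k : 'I_L, E (t + k)%N j i].

Definition strongly_connected (n : nat) (e : rel 'I_n) : Prop :=
  forall i j : 'I_n, connect e i j.

Definition uniformly_strongly_connected (n : nat) (E : graph_seq n) : Prop :=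
  exists L : nat, (0 < L)%N /\
    forall t : nat, strongly_connected (union_rel E t L).

Fixpoint push_sum_y (R : ringType) (n : nat)
  (w : nat -> 'I_n -> 'I_n -> R) (t : nat) : 'I_n -> R :=
  match t with
  | 0 => fun _ => 1
  | t'.+1 => fun i => \sum_j w t' i j * push_sum_y w t' j
  end.

Definition S_mat (R : fieldType) (n : nat)
  (w : nat -> 'I_n -> 'I_n -> R) (t : nat) : 'I_n -> 'I_n -> R :=
  fun i j => w t i j * push_sum_y w t j / push_sum_y w t.+1 i.

Definition stochastic_vector (R : numDomainType) (n : nat) (p : 'I_n -> R) : Prop :=
  (forall i, 0 <= p i) /\ \sum_i p i = 1.

Definition absolute_probability_sequence (R : numDomainType) (n : nat)
  (S : nat -> 'I_n -> 'I_n -> R) (pi : nat -> 'I_n -> R) : Prop :=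
  (forall t, stochastic_vector (pi t)) /\
  (forall t j, pi t j = \sum_i pi t.+1 i * S t i j).

(* Main.v *)
Require Import Defs.
From mathcomp Require Import all_boot all_order all_algebra.
From mathcomp Require Import zify ring lra.
From mathcomp Require Import reals.
Import Order.TTheory GRing.Theory Num.Theory.
Local Open Scope ring_scope.
Set Implicit Arguments. Unset Strict Implicit.

Fixpoint reach (n : nat) (E : graph_seq n) (d r : nat) (j k : 'I_n) : bool :=
  if d is d'.+1 then [exists j1, E r j j1 && reach E d' r.+1 j1 k] else j == k.

Lemma reach_pad n (E : graph_seq n) : (forall t i, E t i i) ->
  forall q d r j k, reach E d (r + q) j k -> reach E (q + d) r j k.
Proof.
move=> Hl; elim=> [|q IH] d r j k /=; first by rewrite addn0.
rewrite addnS -addSn => /IH H; apply/existsP; exists j; by rewrite Hl H.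
Qed.

Lemma connect_cross n (e : rel 'I_n) (A : {set 'I_n}) x y :
  connect e x y -> x \notin A -> y \in A ->
  exists u v, [/\ e u v, u \notin A & v \in A].
Proof.
move=> /connectP [p Hp ->]; elim: p x Hp => [|v p IH] x /=.
  by move=> _ /negP.
case/andP=> exv Hp xA; case vA: (v \in A).
  by move=> _; exists x, v.
by apply: IH => //; rewrite vA.
Qed.

Lemma reach_card n (E : graph_seq n) L k : (forall t i, E t i i) ->
  (forall t, strongly_connected (union_rel E t L)) ->
  forall m r, (minn n m.+1 <= #|[set j | reach E (m * L) r j k]|)%N.
Proof.
move=> Hl Hc; elim=> [|m IH] r.
  apply: leq_trans (geq_minr _ _) _.
  rewrite mul0n; apply/card_gt0P; exists k; by rewrite inE /=.
set A := [set j | reach E (m * L) (r + L) j k].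
set B := [set j | reach E (m.+1 * L) r j k].
have AB : A \subset B.
  apply/subsetP => j; rewrite /A /B !inE => /(reach_pad Hl).
  by rewrite mulSn.
have kA : k \in A.
  rewrite /A inE; have := @reach_pad _ E Hl (m * L) 0 (r + L) k k; rewrite addn0; apply; by rewrite /= eqxx.
case: (boolP ([set: 'I_n] \subset A)) => HA.
  apply: leq_trans (geq_minl _ _) _.
  apply: leq_trans (subset_leq_card (subset_trans HA AB)).
  by rewrite cardsT card_ord.
case/subsetPn: HA => x _ xA.
have [u [v [euv uA vA]]] := connect_cross (Hc r x k) xA kA.
case/existsP: euv => q Eq.
have uB : u \in B.
  rewrite inE.
  have H1 : reach E ((L - q.+1) + m * L) (r + q).+1 v k.
    apply: reach_pad => //; move: vA; rewrite inE.
    have -> : ((r + q).+1 + (L - q.+1) = r + L)%N.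
      have := ltn_ord q; lia.
    by [].
  have H2 : reach E ((L - q.+1) + m * L).+1 (r + q) u k.
    apply/existsP; exists v; rewrite Eq /=; exact: H1.
  have := reach_pad Hl H2.
  have -> : (q + ((L - q.+1) + m * L).+1 = m.+1 * L)%N.
    have := ltn_ord q; rewrite mulSn; lia.
  by [].
have : (#|u |: A| <= #|B|)%N.
  by apply: subset_leq_card; rewrite subUset sub1set uB AB.
rewrite cardsU1 uA add1n => H.
have HxA : (#|x |: A| <= n)%N by rewrite -[X in (_ <= X)%N]card_ord max_card.
rewrite cardsU1 xA add1n in HxA.
have := IH (r + L); rewrite -/A; lia.
Qed.

Lemma reach_full n (E : graph_seq n) L : (forall t i, E t i i) ->
  (forall t, strongly_connected (union_rel E t L)) ->
  forall r j k, reach E (n * L) r j k.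
Proof.
move=> Hl Hc r j k.
have := reach_card k Hl Hc n r; rewrite (minn_idPl (leqnSn n)).
set A := [set _ | _] => HA.
have : A = setT.
  by apply/eqP; rewrite eqEcard subsetT cardsT card_ord.
move/setP/(_ j); by rewrite !inE.
Qed.

Lemma sum_ge_term (R : numDomainType) n (f : 'I_n -> R) i :
  (forall j, 0 <= f j) -> f i <= \sum_j f j.
Proof.
move=> H; rewrite (bigD1 i) //= lerDl; apply: sumr_ge0 => j _; exact: H.
Qed.

Lemma prop_lower (R : realFieldType) n (E : graph_seq n)
  (w : nat -> 'I_n -> 'I_n -> R) (z : nat -> 'I_n -> R) (beta : R) :
  (forall t i j, 0 <= w t i j) -> (forall t j, \sum_i w t i j = 1) ->
  (forall t i j, E t j i -> beta <= w t i j) -> 0 <= beta ->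
  (forall t j, z t j = \sum_i w t i j * z t.+1 i) ->
  forall d r m, (forall i, m <= z (r + d)%N i) ->
  (forall i, m <= z r i) /\
  (forall j k, reach E d r j k -> beta ^+ d * (z (r + d)%N k - m) <= z r j - m).
Proof.
move=> w0 w1 wb b0 zrec; elim=> [|d IH] r m Hm.
  rewrite addn0 in Hm; split => // j k /= /eqP ->; by rewrite expr0 mul1r addn0.
have Hm' : forall i, m <= z (r.+1 + d)%N i by move=> i; rewrite addSn -addnS.
have [IH1 IH2] := IH r.+1 m Hm'.
have Hdiff : forall j, z r j - m = \sum_i w r i j * (z r.+1 i - m).
  move=> j; rewrite zrec.
  under [in RHS]eq_bigr do rewrite mulrBr.
  by rewrite sumrB -mulr_suml w1 mul1r.
split.
  move=> i; rewrite -subr_ge0 Hdiff; apply: sumr_ge0 => k _.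
  by apply: mulr_ge0; rewrite ?subr_ge0.
move=> j k /existsP [j1 /andP [Ej Hr]].
rewrite Hdiff; apply: le_trans (sum_ge_term j1 _); last first.
  by move=> i; apply: mulr_ge0; rewrite ?subr_ge0.
rewrite exprS -mulrA addnS -addSn; apply: ler_pM => //.
  by apply: mulr_ge0; [exact: exprn_ge0 | rewrite subr_ge0; exact: Hm'].
  exact: wb.
exact: IH2.
Qed.

Lemma y_lower (R : realFieldType) n (E : graph_seq n)
  (w : nat -> 'I_n -> 'I_n -> R) (y : nat -> 'I_n -> R) (beta : R) :
  (forall t i j, 0 <= w t i j) ->
  (forall t i j, E t j i -> beta <= w t i j) -> 0 <= beta ->
  (forall t i, 0 <= y t i) ->
  (forall t i, y t.+1 i = \sum_j w t i j * y t j) ->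
  forall d r j k, reach E d r j k -> beta ^+ d * y r j <= y (r + d)%N k.
Proof.
move=> w0 wb b0 y0 yrec; elim=> [|d IH] r j k /=.
  by move/eqP->; rewrite expr0 mul1r addn0.
case/existsP=> j1 /andP [Ej Hr].
have H1 : beta * y r j <= y r.+1 j1.
  rewrite yrec; apply: le_trans (sum_ge_term j _); last first.
    by move=> i; apply: mulr_ge0.
  by apply: ler_wpM2r => //; exact: wb.
rewrite exprSr -mulrA addnS -addSn; apply: le_trans (IH _ _ _ Hr).
by apply: ler_wpM2l => //; exact: exprn_ge0.
Qed.

Lemma exists_max (R : realDomainType) n (f : 'I_n -> R) : (0 < n)%N ->
  exists k, forall i, f i <= f k.
Proof.
case: n f => // n f _.
case: (@arg_maxP _ R 'I_n.+1 ord0 xpredT f isT) => k _ H; exists k => i; exact: H.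
Qed.

Lemma exists_min (R : realDomainType) n (f : 'I_n -> R) : (0 < n)%N ->
  exists k, forall i, f k <= f i.
Proof.
move=> n0; have [k Hk] := exists_max (fun i => - f i) n0.
by exists k => i; rewrite -lerN2 Hk.
Qed.

Lemma contract (R : realFieldType) n (E : graph_seq n)
  (w : nat -> 'I_n -> 'I_n -> R) (z : nat -> 'I_n -> R) (beta : R) D :
  (0 < n)%N ->
  (forall t i j, 0 <= w t i j) -> (forall t j, \sum_i w t i j = 1) ->
  (forall t i j, E t j i -> beta <= w t i j) -> 0 <= beta -> beta <= 1 ->
  (forall t j, z t j = \sum_i w t i j * z t.+1 i) ->
  (forall r j k, reach E D r j k) ->
  forall t delta, (forall a b, z (t + D)%N a - z (t + D)%N b <= delta) ->
  forall a b, z t a - z t b <= (1 - beta ^+ D) * delta.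
Proof.
move=> n0 w0 w1 wb b0 b1 zrec Hr t delta Hd a b.
have [kM HM] := exists_max (z (t + D)%N) n0.
have [km Hm] := exists_min (z (t + D)%N) n0.
have [_ Hlow] := prop_lower w0 w1 wb b0 zrec Hm.
have zrec' : forall t j, - z t j = \sum_i w t i j * - z t.+1 i.
  by move=> t' j; rewrite zrec -sumrN; apply: eq_bigr => i _; rewrite mulrN.
have HM' : forall i, - z (t + D)%N kM <= - z (t + D)%N i by move=> i; rewrite lerN2.
have [Hup _] := prop_lower w0 w1 wb b0 zrec' HM'.
have := Hlow b kM (Hr _ _ _); have := Hup a; rewrite lerN2.
have := Hd kM km.
have g0 : 0 <= beta ^+ D by exact: exprn_ge0.
have g1 : beta ^+ D <= 1 by exact: exprn_ile1.
set M := z _ kM; set m := z _ km; set g := beta ^+ D.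
move=> H1 H2 H3.
have Mm : 0 <= M - m by rewrite subr_ge0 Hm.
have : (1 - g) * (M - m) <= (1 - g) * delta by apply: ler_wpM2l; rewrite ?subr_ge0.
nra.
Qed.

Lemma bern (R : realFieldType) (g : R) m : 0 <= g -> g <= 1 ->
  (1 - g) ^+ m * (1 + m%:R * g) <= 1.
Proof.
move=> g0 g1; elim: m => [|m IH]; first by rewrite expr0 mul0r addr0 mulr1.
have h0 : 0 <= (1 - g) ^+ m by apply: exprn_ge0; rewrite subr_ge0.
apply: le_trans IH; rewrite exprSr -mulrA; apply: ler_wpM2l => //.
have m0 : 0 <= m%:R :> R by []. rewrite -natr1; nra.
Qed.

Unset Implicit Arguments.
Theorem proposition2 (R : realType) (n : nat) (E : graph_seq n)
  (w : nat -> 'I_n -> 'I_n -> R) :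
  (0 < n)%N ->
  (forall t (i : 'I_n), E t i i) ->
  (forall t (i j : 'I_n), E t j i -> 0 < w t i j) ->
  (forall t (i j : 'I_n), ~~ E t j i -> w t i j = 0) ->
  (exists2 beta : R, 0 < beta &
     forall t (i j : 'I_n), E t j i -> beta <= w t i j) ->
  (forall t (i : 'I_n), \sum_(k | E t i k) w t k i = 1) ->
  uniformly_strongly_connected E ->
  [/\ absolute_probability_sequence (S_mat w)
        (fun t i => push_sum_y w t i / n%:R),
      (forall pi : nat -> 'I_n -> R,
         absolute_probability_sequence (S_mat w) pi ->
         forall t i, pi t i = push_sum_y w t i / n%:R)
    & (forall t (j : 'I_n),
         push_sum_y w t j = \sum_i push_sum_y w t.+1 i * S_mat w t i j)].
Proof.
move=> n0 Hl Hpos Hzero [beta0 b00 Hb0] Hsum [L [L0 Hc]].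
have w0 : forall t i j, 0 <= w t i j.
  move=> t i j; case: (boolP (E t j i)) => h; first exact: ltW (Hpos _ _ _ h).
  by rewrite Hzero.
have w1 : forall t j, \sum_i w t i j = 1.
  move=> t j; rewrite -(Hsum t j) [RHS]big_mkcond; apply: eq_bigr => i _.
  by case: ifP => // /negbT /Hzero ->.
set beta := Num.min beta0 1.
have b0 : 0 < beta by rewrite lt_min b00 ltr01.
have b1 : beta <= 1 by rewrite ge_min lexx orbT.
have Hb : forall t i j, E t j i -> beta <= w t i j.
  by move=> t i j h; apply: le_trans (Hb0 _ _ _ h); rewrite ge_min lexx.
set y := push_sum_y w.
have yrec : forall t i, y t.+1 i = \sum_j w t i j * y t j by [].
have ypos : forall t i, 0 < y t i.
  elim=> [|t IH] i; first exact: ltr01.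
  apply: lt_le_trans (sum_ge_term i _); first exact: mulr_gt0 (Hpos _ _ _ (Hl _ _)) (IH i).
  by move=> j; apply: mulr_ge0 => //; exact: ltW.
have y0 : forall t i, 0 <= y t i by move=> t i; exact: ltW.
have yn0 : forall t i, y t i != 0 by move=> t i; rewrite gt_eqF.
have ysum : forall t, \sum_i y t i = n%:R.
  elim=> [|t IH]; first by rewrite /y /= sumr_const card_ord.
  rewrite /y /=; rewrite exchange_big /=.
  by rewrite -IH; apply: eq_bigr => j _; rewrite -mulr_suml w1 mul1r.
have nR0 : (n%:R : R) != 0 by rewrite pnatr_eq0 -lt0n.
have nR : 0 < (n%:R : R) by rewrite ltr0n.
have part3 : forall t (j : 'I_n),
    y t j = \sum_i y t.+1 i * S_mat w t i j.
  move=> t j; rewrite /S_mat -/y.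
  under eq_bigr do rewrite mulrC divfK //.
  by rewrite -mulr_suml w1 mul1r.
have part1 : absolute_probability_sequence (S_mat w) (fun t i => y t i / n%:R).
  split.
    move=> t; split; first by move=> i; apply: divr_ge0 => //; exact: ltW.
    by rewrite -mulr_suml ysum divff.
  move=> t j; under eq_bigr do rewrite mulrAC.
  by rewrite -mulr_suml -part3.
split => //.
move=> pi [Hst Hrec] t0 i0.
set z := fun t i => pi t i / y t i.
have zrec : forall t j, z t j = \sum_i w t i j * z t.+1 i.
  move=> t j; rewrite /z Hrec mulr_suml; apply: eq_bigr => i _.
  rewrite /S_mat -/y; field; by rewrite !yn0.
set D := (n * L)%N.
have Hr := reach_full Hl Hc.
set g := beta ^+ D.
have g0 : 0 < g by exact: exprn_gt0.
have g1 : g <= 1 by exact: exprn_ile1 (ltW b0) b1.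
have ybound : forall t i, g <= y (t + D)%N i.
  move=> t i.
  have H : \sum_(j < n) g * y t j <= \sum_(j < n) y (t + D)%N i.
    by apply: ler_sum => j _; apply: (y_lower w0 Hb (ltW b0) y0 yrec); exact: Hr.
  move: H; rewrite -mulr_sumr ysum sumr_const card_ord => H.
  by rewrite -(ler_pM2r nR) [y _ _ * _]mulr_natr.
set C := g^-1.
have pi1 : forall t i, pi t i <= 1.
  move=> t i; have [Hp Hs] := Hst t; rewrite -Hs; exact: sum_ge_term.
have z0 : forall t i, 0 <= z t i.
  by move=> t i; apply: divr_ge0; [case: (Hst t) | exact: y0].
have zC : forall t i, z (t + D)%N i <= C.
  move=> t i; rewrite /z ler_pdivrMr // /C.
  apply: le_trans (pi1 _ _) _; rewrite -(mulVf (lt0r_neq0 g0)).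
  by apply: ler_wpM2l (ybound t i); rewrite invr_ge0 ltW.
have spread : forall m t a b, z (t + D)%N a - z (t + D)%N b <= C * (1 - g) ^+ m.
  elim=> [|m IH] t a b.
    rewrite expr0 mulr1; have := zC t a; have := z0 (t + D)%N b; lra.
  have := contract n0 w0 w1 Hb (ltW b0) b1 zrec Hr (IH (t + D)%N).
  by rewrite exprS mulrCA; apply.
have C0 : 0 <= C by rewrite invr_ge0 ltW.
have spread2 : forall m a b, z t0 a - z t0 b <= C * (1 - g) ^+ m.
  move=> m a b; apply: le_trans (contract n0 w0 w1 Hb (ltW b0) b1 zrec Hr (spread m t0) a b) _.
  rewrite -{2}[C * _]mul1r; apply: ler_wpM2r; first by apply: mulr_ge0 => //; apply: exprn_ge0; rewrite subr_ge0.
  by rewrite lerBlDr lerDl ltW.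
have zle : forall a b, z t0 a <= z t0 b.
  move=> a b; rewrite leNgt; apply/negP => Hab.
  set s := z t0 a - z t0 b.
  have s0 : 0 < s by rewrite subr_gt0.
  have sg : 0 < s * g by apply: mulr_gt0.
  have hC : 0 <= C / (s * g) by apply: divr_ge0 => //; exact: ltW.
  have := archi_boundP hC; set m := Num.Def.archi_bound _.
  rewrite ltr_pdivrMr // => Hm.
  have hb := bern m (ltW g0) g1.
  have hs := spread2 m a b; rewrite -/s in hs.
  have q0 : 0 <= (1 - g) ^+ m by apply: exprn_ge0; rewrite subr_ge0.
  have m0 : 0 <= m%:R :> R by [].
  have h1 : s * (1 + m%:R * g) <= C.
    apply: le_trans (_ : C * (1 - g) ^+ m * (1 + m%:R * g) <= C).
      apply: ler_wpM2r => //; nra.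
    rewrite -mulrA -{2}[C]mulr1; exact: ler_wpM2l.
  nra.
have zeq : forall a, z t0 a = z t0 i0.
  by move=> a; apply/eqP; rewrite eq_le !zle.
have pieq : forall a, pi t0 a = z t0 i0 * y t0 a.
  by move=> a; rewrite -(zeq a) /z divfK.
have : \sum_a pi t0 a = 1 by case: (Hst t0).
under eq_bigr do rewrite pieq.
rewrite -mulr_sumr ysum => Hc0.
rewrite pieq mulrC; congr (_ * _).
by apply: (mulIf nR0); rewrite Hc0 mulVf.
Qed.
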